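(* Let $\mathcal{S}=\{c\in\mathbb{M}_2: 0\le c\le 1,\ \operatorname{trace}(c)=1,\ 0<\det(c)<\tfrac14\}$, and let $a,b\in\mathcal{S}$. Then $a$ is absolutely compatible with $b$ if, and only if, there exists a unitary $u\in\mathbb{M}_2$ such that $$u^*au=\begin{pmatrix} t&\alpha\\ \bar\alpha & 1-t\end{pmatrix},\qquad u^*bu=\begin{pmatrix} s&\beta\\ \bar\beta&1-s\end{pmatrix},$$ where $\beta=-\alpha\ne0$, $s,t\in(0,1)$, $|\alpha|^2<t(1-t)$, and either $s=\frac{|\alpha|^2}{t}$ or $s=1-\frac{|\alpha|^2}{1-t}$.
   Context: $\mathbb{M}_2$ is the algebra of $2\times2$ complex matrices; $\operatorname{trace}$ is the non-normalized trace. For $x\in\mathbb{M}_2$, $|x|=(x^*x)^{1/2}$. Elements $0\le a,b\le 1$ are absolutely compatible if $|a-b|+|1-a-b|=1$. Equivalently, $\mathcal{S}=\left\{\begin{pmatrix} t&\alpha\\ \bar\alpha&1-t\end{pmatrix}: t\in(0,1),\ \alpha\in\mathbb{C},\ |\alpha|^2<t(1-t)\right\}\setminus\{\tfrac12 1\}$. *)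

(* Defs.v *)
From mathcomp Require Import all_boot all_order all_algebra.
Set Implicit Arguments. Unset Strict Implicit. Unset Printing Implicit Defensive.
Import Order.TTheory GRing.Theory Num.Theory.
Local Open Scope ring_scope.

(* Complex scalars: any numeric closed field C (e.g. the complex numbers). *)

Definition ctrmx (C : numClosedFieldType) (n : nat) (x : 'M[C]_n) : 'M[C]_n :=
  map_mx Num.conj (x^T).

Definition psdmx (C : numClosedFieldType) (n : nat) (x : 'M[C]_n) : Prop :=
  forall v : 'cV[C]_n, 0 <= ((map_mx Num.conj v)^T *m x *m v) 0 0.

(* p = |x| = (x^* x)^{1/2}, the (unique) positive square root of x^* x *)
Definition is_absmx (C : numClosedFieldType) (n : nat) (x p : 'M[C]_n) : Prop :=
  psdmx p /\ p *m p = ctrmx x *m x.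

Definition abs_compatible (C : numClosedFieldType) (n : nat) (a b : 'M[C]_n) : Prop :=
  exists p q : 'M[C]_n,
    [/\ is_absmx (a - b) p, is_absmx (1%:M - a - b) q & p + q = 1%:M].

Definition is_unitary2 (C : numClosedFieldType) (n : nat) (u : 'M[C]_n) : Prop :=
  ctrmx u *m u = 1%:M.

Definition in_S (C : numClosedFieldType) (c : 'M[C]_2) : Prop :=
  [/\ psdmx c, psdmx (1%:M - c), \tr c = 1 & 0 < \det c < 4^-1].

Definition mx2 (C : numClosedFieldType) (x00 x01 x10 x11 : C) : 'M[C]_2 :=
  \matrix_(i < 2, j < 2)
    if i == 0 then (if j == 0 then x00 else x01) else (if j == 0 then x10 else x11).

(* Main.v *)
Require Import Defs.
From mathcomp Require Import all_boot all_order all_algebra.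
From mathcomp Require Import ring.
Import Order.TTheory GRing.Theory Num.Theory.
Local Open Scope ring_scope.
Set Implicit Arguments. Unset Strict Implicit.


Section S0.
Variable C : numClosedFieldType.

Lemma mx2E (M : 'M[C]_2) : M = mx2 (M 0 0) (M 0 1) (M 1 0) (M 1 1).
Proof.
apply/matrixP => i j; rewrite !mxE.
by case: i => [[|[|i]]] Hi; case: j => [[|[|j]]] Hj //=;
  congr (M _ _); apply: val_inj.
Qed.

Lemma mx2_det (a b c d : C) : \det (mx2 a b c d) = a * d - b * c.
Proof.
rewrite (expand_det_row _ 0) !big_ord_recl big_ord0 /cofactor !det_mx11 !mxE /=.
rewrite !expr0 expr1 addr0. simpl. ring.
Qed.

Lemma mx2_mul (a b c d a' b' c' d' : C) :
  mx2 a b c d *m mx2 a' b' c' d' = mx2 (a*a' + b*c') (a*b' + b*d') (c*a'+d*c') (c*b'+d*d').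
Proof.
apply/matrixP => i j; rewrite !mxE !big_ord_recl big_ord0 !mxE /=.
by case: i => [[|[|i]]] Hi; case: j => [[|[|j]]] Hj //=; rewrite addr0.
Qed.

Lemma mx2_ctr (a b c d : C) : ctrmx (mx2 a b c d) = mx2 a^* c^* b^* d^*.
Proof.
apply/matrixP => i j; rewrite !mxE.
by case: i => [[|[|i]]] Hi; case: j => [[|[|j]]] Hj //=.
Qed.

Lemma mx2_scalar (c : C) : c%:M = mx2 c 0 0 c :> 'M[C]_2.
Proof.
apply/matrixP => i j; rewrite !mxE.
by case: i => [[|[|i]]] Hi; case: j => [[|[|j]]] Hj //=.
Qed.

Lemma mx2_add (a b c d a' b' c' d' : C) :
  mx2 a b c d + mx2 a' b' c' d' = mx2 (a+a') (b+b') (c+c') (d+d').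
Proof.
apply/matrixP => i j; rewrite !mxE.
by case: i => [[|[|i]]] Hi; case: j => [[|[|j]]] Hj //=.
Qed.

Lemma mx2_opp (a b c d : C) : - mx2 a b c d = mx2 (-a) (-b) (-c) (-d).
Proof.
apply/matrixP => i j; rewrite !mxE.
by case: i => [[|[|i]]] Hi; case: j => [[|[|j]]] Hj //=.
Qed.

Lemma mx2_tr (a b c d : C) : \tr (mx2 a b c d) = a + d.
Proof. by rewrite /mxtrace !big_ord_recl big_ord0 !mxE /= addr0. Qed.

Lemma mx2_inj (a b c d a' b' c' d' : C) :
  mx2 a b c d = mx2 a' b' c' d' -> [/\ a = a', b = b', c = c' & d = d'].
Proof.
move=> /matrixP H; split.
- by have := H 0 0; rewrite !mxE.
- by have := H 0 1; rewrite !mxE.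
- by have := H 1 0; rewrite !mxE.
- by have := H 1 1; rewrite !mxE.
Qed.
End S0.



Section S1.
Variable C : numClosedFieldType.

Definition cv2 (x y : C) : 'cV[C]_2 := \col_(i < 2) if i == 0 then x else y.

Lemma quad2 (a b c d x y : C) :
  ((map_mx Num.conj (cv2 x y))^T *m mx2 a b c d *m cv2 x y) 0 0
  = x^* * (a * x + b * y) + y^* * (c * x + d * y).
Proof.
rewrite !mxE !big_ord_recl big_ord0 !mxE /= !big_ord_recl !big_ord0 !mxE /=.
ring.
Qed.

Lemma psd2_herm' (a b c d : C) : psdmx (mx2 a b c d) ->
  [/\ c = b^*, 0 <= a & 0 <= d].
Proof.
move=> H.
have h1 := H (cv2 1 0); have h2 := H (cv2 0 1); have h3 := H (cv2 1 1).
have h4 := H (cv2 1 'i).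
rewrite quad2 in h1; rewrite quad2 in h2; rewrite quad2 in h3; rewrite quad2 in h4.
move: h1 h2 h3 h4; rewrite !rmorph0 !rmorph1 conjCi.
rewrite !(mul0r, mulr0, mul1r, mulr1, addr0, add0r).
move=> h1 h2 h3 h4; split => //.
move/geC0_conj: h3 => h3; move/geC0_conj: h4 => h4.
move/geC0_conj: h1 => h1; move/geC0_conj: h2 => h2.
rewrite !rmorphD /= h1 h2 in h3.
rewrite !(rmorphD, rmorphM, rmorphN) /= conjCi h1 h2 in h4.
have X : b^* + c^* - b - c = 0.
  by rewrite -(subrr (a + b + (c + d))) -{1}h3; ring.
have Y : - 'i * b^* + 'i * c^* - 'i * b + 'i * c = 0.
  by rewrite -(subrr (a + b * 'i + - 'i * (c + d * 'i))) -{1}h4; ring.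
have Z : (c^* - b) *+ 2 = (b^* + c^* - b - c) - 'i * (- 'i * b^* + 'i * c^* - 'i * b + 'i * c)
     + (1 + 'i^+2) * (c^* - b^* - b + c) by ring.
rewrite X Y sqrCi addrN mulr0 mul0r !subr0 addr0 in Z.
move/eqP: Z; rewrite mulrn_eq0 /= subr_eq0 => /eqP <-.
by rewrite conjCK.
Qed.

Lemma psd2_herm (M : 'M[C]_2) : psdmx M ->
  [/\ M 1 0 = (M 0 1)^*, 0 <= M 0 0 & 0 <= M 1 1].
Proof. by rewrite {1}[M]mx2E => /psd2_herm'. Qed.
End S1.



Section S2.
Variable C : numClosedFieldType.
Variable n : nat.
Implicit Types A B u a b : 'M[C]_n.

Lemma ctrmx_mul A B : ctrmx (A *m B) = ctrmx B *m ctrmx A.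
Proof. by rewrite /ctrmx trmx_mul map_mxM. Qed.

Lemma ctrmxK A : ctrmx (ctrmx A) = A.
Proof.
by apply/matrixP => i j; rewrite !mxE conjCK.
Qed.

Lemma ctrmxD A B : ctrmx (A + B) = ctrmx A + ctrmx B.
Proof. by apply/matrixP => i j; rewrite !mxE rmorphD. Qed.

Lemma ctrmxN A : ctrmx (- A) = - ctrmx A.
Proof. by apply/matrixP => i j; rewrite !mxE rmorphN. Qed.

Lemma ctrmx1 : ctrmx (1%:M : 'M[C]_n) = 1%:M.
Proof. by rewrite /ctrmx trmx1 map_mx1. Qed.

Lemma unitaryC u : is_unitary2 u -> u *m ctrmx u = 1%:M.
Proof. exact: mulmx1C. Qed.

Lemma psd_conj u a : psdmx a -> psdmx (ctrmx u *m a *m u).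
Proof.
move=> H v.
have -> : (map_mx Num.conj v)^T *m (ctrmx u *m a *m u) *m v
   = (map_mx Num.conj (u *m v))^T *m a *m (u *m v).
  have E : (map_mx Num.conj v)^T *m ctrmx u = (map_mx Num.conj (u *m v))^T.
    by rewrite /ctrmx map_trmx -map_mxM -trmx_mul map_trmx.
  by rewrite !mulmxA E.
exact: (H (u *m v)).
Qed.

Lemma conj_mul u a b : is_unitary2 u ->
  ctrmx u *m (a *m b) *m u = (ctrmx u *m a *m u) *m (ctrmx u *m b *m u).
Proof.
move=> Hu; rewrite !mulmxA -[ctrmx u *m a *m u *m ctrmx u]mulmxA unitaryC //.
by rewrite mulmx1.
Qed.

Lemma conj_sub u a b :
  ctrmx u *m (a - b) *m u = ctrmx u *m a *m u - ctrmx u *m b *m u.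
Proof. by rewrite mulmxBr mulmxBl. Qed.

Lemma conj_one u : is_unitary2 u -> ctrmx u *m 1%:M *m u = 1%:M.
Proof. by move=> Hu; rewrite mulmx1. Qed.

Lemma conj_ctr u a : ctrmx (ctrmx u *m a *m u) = ctrmx u *m ctrmx a *m u.
Proof. by rewrite !ctrmx_mul ctrmxK mulmxA. Qed.

Lemma compat_conj u a b : is_unitary2 u -> abs_compatible a b ->
  abs_compatible (ctrmx u *m a *m u) (ctrmx u *m b *m u).
Proof.
move=> Hu [p [q [[Pp Ep] [Pq Eq] Epq]]].
exists (ctrmx u *m p *m u), (ctrmx u *m q *m u); split.
- split; first exact: psd_conj.
  by rewrite -conj_mul // Ep conj_mul // -conj_ctr !conj_sub.
- split; first exact: psd_conj.
  by rewrite -conj_mul // Eq conj_mul // -conj_ctr !conj_sub conj_one.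
- by rewrite -mulmxDl -mulmxDr Epq conj_one.
Qed.

Lemma unitary_ctr u : is_unitary2 u -> is_unitary2 (ctrmx u).
Proof. by move=> Hu; rewrite /is_unitary2 ctrmxK unitaryC. Qed.

Lemma conj_back u a : is_unitary2 u ->
  ctrmx (ctrmx u) *m (ctrmx u *m a *m u) *m ctrmx u = a.
Proof.
move=> Hu; rewrite ctrmxK !mulmxA unitaryC // mul1mx -mulmxA unitaryC //.
by rewrite mulmx1.
Qed.

Lemma compat_conj_inv u a b : is_unitary2 u ->
  abs_compatible (ctrmx u *m a *m u) (ctrmx u *m b *m u) -> abs_compatible a b.
Proof.
move=> Hu H; rewrite -(@conj_back u a Hu) -(@conj_back u b Hu).
by apply: compat_conj => //; apply: unitary_ctr.
Qed.
End S2.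

Lemma inS_conj (C : numClosedFieldType) (u a : 'M[C]_2) : is_unitary2 u -> in_S a ->
  in_S (ctrmx u *m a *m u).
Proof.
move=> Hu [P1 P2 T D]; split.
- exact: psd_conj.
- by rewrite -(conj_one Hu) -conj_sub; apply: psd_conj.
- by rewrite mxtrace_mulC mulmxA unitaryC // mul1mx.
- by rewrite !det_mulmx mulrC mulrA -det_mulmx unitaryC // det1 mul1r.
Qed.



Section S3.
Variable C : numClosedFieldType.

Lemma scalar_psd n (c : C) : 0 <= c -> psdmx (c%:M : 'M[C]_n).
Proof.
move=> c0 v; rewrite mul_mx_scalar -scalemxAl mxE mulr_ge0 // mxE.
apply: sumr_ge0 => i _; rewrite !mxE mulrC; exact: mul_conjC_ge0.
Qed.

Variables (t s al : C).
Hypotheses (ht : t^* = t) (hs : s^* = s).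

Let A := mx2 t al al^* (1 - t).
Let B := mx2 s (- al) (- al)^* (1 - s).
Let r2 := (t - s) ^+ 2 + (al * al^*) *+ 4.
Let r2' := (t + s - 1) ^+ 2.

Lemma E1 : ctrmx (A - B) *m (A - B) = mx2 r2 0 0 r2.
Proof.
have HD : A - B = mx2 (t - s) (al *+ 2) (al^* *+ 2) (s - t).
  by rewrite /A /B mx2_opp mx2_add rmorphN /=; congr mx2; ring.
rewrite HD mx2_ctr !rmorphB !rmorphMn /= conjCK ht hs mx2_mul /r2; congr mx2; ring.
Qed.

Lemma E2 : ctrmx (1%:M - A - B) *m (1%:M - A - B) = mx2 r2' 0 0 r2'.
Proof.
have HD : 1%:M - A - B = mx2 (1 - t - s) 0 0 (t + s - 1).
  by rewrite /A /B mx2_scalar !mx2_opp !mx2_add rmorphN /=; congr mx2; ring.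
rewrite HD mx2_ctr !rmorphB !rmorphD /= rmorph0 rmorph1 ht hs mx2_mul /r2'; congr mx2; ring.
Qed.


Lemma compat_fwd : t != 0 -> 1 - t != 0 -> abs_compatible A B ->
  s = `|al| ^+ 2 / t \/ s = 1 - `|al| ^+ 2 / (1 - t).
Proof.
move=> t0 t1 [p [q [[Pp Ep] [Pq Eq] Epq]]].
have Hq : q = 1%:M - p by rewrite -Epq addrC addKr.
rewrite E1 in Ep; rewrite E2 Hq in Eq.
rewrite [p]mx2E mx2_mul in Ep; rewrite [p]mx2E mx2_scalar mx2_opp mx2_add mx2_mul in Eq.
case: (mx2_inj Ep) => e1 e2 _ _; case: (mx2_inj Eq) => f1 f2 _ _.
move: (p 0 0) (p 0 1) (p 1 0) (p 1 1) e1 e2 f1 f2 => a b c d e1 e2 f1 f2.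
have b0 : b = 0.
  have K : b *+ 2 = (a * b + b * d) - ((1 + - a) * (0 + - b) + (0 + - b) * (1 + - d)) by ring.
  by move: K; rewrite e2 f2 subr0 => /eqP; rewrite mulrn_eq0 /= => /eqP.
rewrite b0 !(mul0r, mulr0, addr0, add0r, oppr0) in e1 f1.
rewrite normCK.
have : (1 - a - (t + s - 1)) * (1 - a + (t + s - 1)) = 0.
  have K : (1 - a - (t + s - 1)) * (1 - a + (t + s - 1)) = (1 + - a) * (1 + - a) - r2' by rewrite /r2'; ring.
  by rewrite K f1 subrr.
move/eqP; rewrite mulf_eq0 => /orP [] /eqP H.
- have Ha : a = 2 - t - s.
    by apply/eqP; rewrite -subr_eq0 -oppr_eq0 -H; apply/eqP; ring.
  have K : ((1 - t) * (1 - s) - al * al^*) *+ 4 = a * a - r2 by rewrite Ha /r2; ring.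
  move: K; rewrite e1 subrr => /eqP; rewrite mulrn_eq0 /= subr_eq0 => /eqP K.
  by right; rewrite -K; field.
- have Ha : a = t + s.
    by apply/eqP; rewrite -subr_eq0 -oppr_eq0 -H; apply/eqP; ring.
  have K : (t * s - al * al^*) *+ 4 = a * a - r2 by rewrite Ha /r2; ring.
  move: K; rewrite e1 subrr => /eqP; rewrite mulrn_eq0 /= subr_eq0 => /eqP K.
  by left; rewrite -K; field.
Qed.

Lemma compat_bwd : 0 < t -> 0 < 1 - t -> `|al| ^+ 2 < t * (1 - t) ->
  (s = `|al| ^+ 2 / t \/ s = 1 - `|al| ^+ 2 / (1 - t)) -> abs_compatible A B.
Proof.
rewrite normCK => t0 t1 Hlt Hs.
have tn0 : t != 0 by rewrite gt_eqF.
have t1n0 : 1 - t != 0 by rewrite gt_eqF.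
have N0 : 0 <= al * al^* := mul_conjC_ge0 al.
have Hle := ltW Hlt.
suff [c [c0 c1 Ec1 Ec2]] : exists c, [/\ 0 <= c, 0 <= 1 - c, c * c = r2 & (1 - c) * (1 - c) = r2'].
  exists c%:M, (1 - c)%:M; split.
  - split; first exact: scalar_psd.
    by rewrite -scalar_mxM E1 Ec1 mx2_scalar.
  - split; first exact: scalar_psd.
    by rewrite -scalar_mxM E2 Ec2 mx2_scalar.
  - by rewrite !mx2_scalar mx2_add; congr mx2; ring.
case: Hs => Hs.
- exists (t + s); split.
  + by rewrite Hs; apply: addr_ge0; [exact: ltW | apply: divr_ge0 => //; exact: ltW].
  + have : al * al^* / t <= 1 - t by rewrite ler_pdivrMr // [X in _ <= X]mulrC.
    by rewrite -subr_ge0 Hs => H; apply: le_trans H _; rewrite le_eqVlt; apply/orP; left; apply/eqP; ring.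
  + by rewrite /r2 Hs; field.
  + by rewrite /r2' Hs; ring.
- exists (2 - t - s); split.
  + have -> : 2 - t - s = (1 - t) + al * al^* / (1 - t) by rewrite Hs; ring.
    by apply: addr_ge0; [exact: ltW | apply: divr_ge0 => //; exact: ltW].
  + have : al * al^* / (1 - t) <= t by rewrite ler_pdivrMr.
    by rewrite -subr_ge0 Hs => H; apply: le_trans H _; rewrite le_eqVlt; apply/orP; left; apply/eqP; ring.
  + by rewrite /r2 Hs; field.
  + by rewrite /r2' Hs; ring.
Qed.

End S3.



Section S4.
Variable C : numClosedFieldType.

Lemma inS_coords (M : 'M[C]_2) : in_S M ->
  [/\ M = mx2 (M 0 0) (M 0 1) (M 0 1)^* (1 - M 0 0), 0 < M 0 0 < 1
    & `|M 0 1| ^+ 2 < M 0 0 * (1 - M 0 0)].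
Proof.
case=> P1 P2 T D.
have [h10 a0 d0] := psd2_herm P1.
have Md : M 1 1 = 1 - M 0 0.
  by move: T; rewrite {1}[M]mx2E mx2_tr => <-; rewrite addrC addKr.
have ME : M = mx2 (M 0 0) (M 0 1) (M 0 1)^* (1 - M 0 0).
  by rewrite {1}[M]mx2E h10 Md.
rewrite Md in d0.
move: D; rewrite {1}ME mx2_det => /andP [D _].
rewrite subr_gt0 in D.
have N0 := mul_conjC_ge0 (M 0 1).
split => //; last by rewrite normCK.
have t0 : M 0 0 != 0.
  apply/negP => /eqP E; move: D; rewrite E mul0r => D.
  by move: (lt_le_trans D N0); rewrite ltxx.
have t1 : 1 - M 0 0 != 0.
  apply/negP => /eqP E; move: D; rewrite E mulr0 => D.
  by move: (lt_le_trans D N0); rewrite ltxx.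
apply/andP; split; first by rewrite lt0r t0.
by rewrite -subr_gt0 lt0r t1.
Qed.

Lemma diag2 (x y g : C) : x^* = x -> y^* = y ->
  exists u : 'M[C]_2, is_unitary2 u /\ (ctrmx u *m mx2 x g g^* y *m u) 0 1 = 0.
Proof.
move=> hx hy.
have [->|g0] := eqVneq g 0.
  exists 1%:M; split; first by rewrite /is_unitary2 ctrmx1 mulmx1.
  by rewrite ctrmx1 mulmx1 mul1mx mxE.
pose d := (x - y) / 2.
have hd : d^* = d.
  by rewrite /d rmorphM fmorphV rmorphB /= hx hy rmorph_nat.
have H0 : 0 <= d ^+ 2 + g * g^*.
  by apply: addr_ge0; [rewrite expr2 -{2}hd; exact: mul_conjC_ge0 | exact: mul_conjC_ge0].
pose r := sqrtC (d ^+ 2 + g * g^*).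
have hr2 : r ^+ 2 = d ^+ 2 + g * g^* by rewrite sqrtCK.
have hr : r^* = r by apply: geC0_conj; rewrite sqrtC_ge0.
pose k := r - d.
have hk : k^* = k by rewrite /k rmorphB /= hr hd.
have N0 : 0 < g * g^* + k ^+ 2.
  apply: (@lt_le_trans _ _ (g * g^*)); first by rewrite mul_conjC_gt0.
  by rewrite lerDl expr2 -{2}hk mul_conjC_ge0.
pose n := sqrtC (g * g^* + k ^+ 2).
have hn2 : n ^+ 2 = g * g^* + k ^+ 2 by rewrite sqrtCK.
have hn : n^* = n by apply: geC0_conj; rewrite sqrtC_ge0 ltW.
have n0 : n != 0 by rewrite sqrtC_eq0 gt_eqF.
exists (mx2 (g / n) (- (k / n)) (k / n) (g^* / n)); split.
  rewrite /is_unitary2 mx2_ctr mx2_mul mx2_scalar.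
  rewrite !(rmorphM, fmorphV, rmorphN) /= conjCK hk hn.
  congr mx2.
  - have -> : g^* * n^-1 * (g * n^-1) + k * n^-1 * (k * n^-1) = (g * g^* + k ^+ 2) / n ^+ 2 by field.
    by rewrite -hn2 divff // expf_neq0.
  - by field.
  - by field.
  - have -> : - (k * n^-1) * - (k * n^-1) + g * n^-1 * (g^* * n^-1) = (g * g^* + k ^+ 2) / n ^+ 2 by field.
    by rewrite -hn2 divff // expf_neq0.
rewrite mx2_ctr !(rmorphM, fmorphV, rmorphN) /= conjCK hk hn !mx2_mul mxE /=.
have -> : (g^* * n^-1 * x + k * n^-1 * g^*) * - (k * n^-1) + (g^* * n^-1 * g + k * n^-1 * y) * (g^* * n^-1)
   = g^* / n ^+ 2 * (g * g^* + d ^+ 2 - r ^+ 2).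
  by rewrite /k /d; field; rewrite ?pnatr_eq0 ?n0.
have Z : g * g^* + d ^+ 2 - r ^+ 2 = 0 by rewrite hr2; ring.
by rewrite Z mulr0.
Qed.
End S4.

Unset Implicit Arguments. Set Strict Implicit.

Theorem theorem3p5 (C : numClosedFieldType) (a b : 'M[C]_2) :
  in_S a -> in_S b ->
  (abs_compatible a b <->
   exists (u : 'M[C]_2) (t s alpha beta : C),
     [/\ is_unitary2 u,
         ctrmx u *m a *m u = mx2 t alpha (Num.conj alpha) (1 - t),
         ctrmx u *m b *m u = mx2 s beta (Num.conj beta) (1 - s),
         [/\ beta = - alpha, alpha != 0, 0 < s < 1, 0 < t < 1
            & `|alpha| ^+ 2 < t * (1 - t)] &
         s = `|alpha| ^+ 2 / t \/ s = 1 - `|alpha| ^+ 2 / (1 - t)]).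
Proof.
move=> Sa Sb; split.
- move=> Hc.
  have [Pa _ _ _] := Sa; have [Pb _ _ _] := Sb.
  have [ha10 ha0 ha1] := psd2_herm Pa.
  have [hb10 hb0 hb1] := psd2_herm Pb.
  have hx : (a 0 0 + b 0 0)^* = a 0 0 + b 0 0 by rewrite rmorphD /= !geC0_conj.
  have hy : (a 1 1 + b 1 1)^* = a 1 1 + b 1 1 by rewrite rmorphD /= !geC0_conj.
  have [u [Hu Hd]] := diag2 (a 0 1 + b 0 1) hx hy.
  have Hab : a + b = mx2 (a 0 0 + b 0 0) (a 0 1 + b 0 1) (a 0 1 + b 0 1)^* (a 1 1 + b 1 1).
    by rewrite {1}[a]mx2E {1}[b]mx2E mx2_add ha10 hb10 rmorphD.
  rewrite -Hab mulmxDr mulmxDl mxE in Hd.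
  have [EA tA lA] := inS_coords (inS_conj Hu Sa).
  have [EB tB lB] := inS_coords (inS_conj Hu Sb).
  have HC := compat_conj Hu Hc.
  move: Hd EA tA lA EB tB lB HC.
  move Ea : (ctrmx u *m a *m u) => A; move Eb : (ctrmx u *m b *m u) => B.
  move=> Hd EA tA lA EB tB lB HC.
  have Hbe : B 0 1 = - A 0 1 by apply/eqP; rewrite -addr_eq0 addrC Hd.
  rewrite Hbe in EB lB.
  rewrite EA EB in HC.
  have t0 : 0 < A 0 0 by case/andP: tA.
  have s0 : 0 < B 0 0 by case/andP: tB.
  have ht := geC0_conj (ltW t0).
  have hs := geC0_conj (ltW s0).
  have tn0 : A 0 0 != 0 by rewrite gt_eqF.
  have t1n0 : 1 - A 0 0 != 0 by case/andP: tA => _; rewrite -subr_gt0 => /gt_eqF ->.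
  have Hrel := compat_fwd ht hs tn0 t1n0 HC.
  exists u, (A 0 0), (B 0 0), (A 0 1), (B 0 1); split => //.
  - by rewrite Ea.
  - by rewrite Eb Hbe.
  - split => //.
    apply/negP => /eqP a0; move: Hrel tB; rewrite a0 normr0 expr2 mulr0 !mul0r subr0.
    by case => ->; rewrite ?ltxx ?andbF.
- case=> [u [t [s [al [be [Hu HA HB [Hbe Hal Hs Ht Hlt] Hrel]]]]]].
  apply: (compat_conj_inv Hu).
  rewrite HA HB Hbe.
  have t0 : 0 < t by case/andP: Ht.
  have s0 : 0 < s by case/andP: Hs.
  apply: compat_bwd => //.
  + exact: geC0_conj (ltW t0).
  + exact: geC0_conj (ltW s0).
  + by case/andP: Ht => _; rewrite subr_gt0.
Qed.
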